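(* Let $k\geq 2$ and let $H$ be a maximal outerplanar graph of order $2k$ whose Hamiltonian cycle bounding the outer face is $a_1a_2\cdots a_{2k}a_1$. Let $G_H$ be the graph obtained from $H$ by adding $k$ new vertices $u_1,\dots,u_k$ and the $2k$ new edges $u_ia_{2i-1}$, $u_ia_{2i}$ for $i=1,\dots,k$. Then $G_H$ is a maximal outerplanar graph of order $n=3k$ with exactly $t=k$ vertices of degree $2$, and $\gamma_{\times 2}(G_H)=\frac{2n}{3}=\frac{n+t}{2}=n-t$. *)

(* Defs.v *)
From mathcomp Require Import all_boot.
Set Implicit Arguments. Unset Strict Implicit. Unset Printing Implicit Defensive.

Section Graphs.
Variable T : finType.

Definition simple_graph (e : rel T) : Prop := irreflexive e /\ symmetric e.

(* Outerplanarity via the standard circle (convex) drawing: the vertices can be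
   placed in some cyclic order on a circle so that, drawing edges as chords, no
   two edges cross.  Positions are given by an injective map into nat; two
   chords ab and cd cross iff their endpoints strictly interleave. *)
Definition outerplanar (e : rel T) : Prop :=
  exists f : T -> nat, injective f /\
    forall a b c d, e a b -> e c d -> ~ (f a < f c /\ f c < f b /\ f b < f d).

Definition add_edge (e : rel T) (x y : T) : rel T :=
  fun a b => [|| e a b, (a == x) && (b == y) | (a == y) && (b == x)].

Definition maximal_outerplanar (e : rel T) : Prop :=
  simple_graph e /\ outerplanar e /\
  forall x y, x != y -> ~~ e x y -> ~ outerplanar (add_edge e x y).

Definition degree (e : rel T) (v : T) : nat := #|[set y | e v y]|.

Definition double_dominating (e : rel T) (D : {set T}) : bool :=
  [forall v, 2 <= #|[set y in D | (y == v) || e v y]|].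

(* double domination number gamma_{x2}: minimum size of a double dominating set
   (returns #|T| by convention if none exists; irrelevant for graphs without
   isolated vertices) *)
Definition double_dom_number (e : rel T) : nat :=
  \big[minn/#|T|]_(D : {set T} | double_dominating e D) #|D|.

End Graphs.

(* The graph G_H: vertices inl a_j (j : 'I_(2k), a_{j+1} in 1-based naming)
   and inr u_i (i : 'I_k, u_{i+1} in 1-based naming); u_i is joined to the
   0-based vertices 2i and 2i+1 (i.e. a_{2i-1}, a_{2i} in 1-based naming). *)
Definition GH (k : nat) (H : rel 'I_(2 * k)) : rel ('I_(2 * k) + 'I_k)%type :=
  fun x y =>
    match x, y with
    | inl a, inl b => H a b
    | inl a, inr i => (nat_of_ord a == 2 * i) || (nat_of_ord a == (2 * i).+1)
    | inr i, inl a => (nat_of_ord a == 2 * i) || (nat_of_ord a == (2 * i).+1)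
    | inr _, inr _ => false
    end.

(* Main.v *)
Require Import Defs.
From mathcomp Require Import all_boot.
From mathcomp Require Import zify.
Set Implicit Arguments. Unset Strict Implicit. Unset Printing Implicit Defensive.

Section Gen.
Variable T : finType.
Implicit Types (e : rel T) (f : T -> nat).

Definition betw f (c d v : T) := ((f c < f v) && (f v < f d)) || ((f d < f v) && (f v < f c)).

Definition NC e f := forall a b c d, e a b -> e c d -> ~ (f a < f c /\ f c < f b /\ f b < f d).

Lemma edge_same e f c d v w : injective f -> symmetric e -> NC e f -> e c d -> e v w ->
  v != c -> v != d -> w != c -> w != d -> betw f c d v = betw f c d w.
Proof.
move=> fi sy nc ecd evw vc vd wc wd.
have edc : e d c by rewrite sy.
have ewv : e w v by rewrite sy.
have h1 := nc _ _ _ _ ecd evw. have h2 := nc _ _ _ _ ecd ewv.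
have h3 := nc _ _ _ _ edc evw. have h4 := nc _ _ _ _ edc ewv.
have h5 := nc _ _ _ _ evw ecd. have h6 := nc _ _ _ _ evw edc.
have h7 := nc _ _ _ _ ewv ecd. have h8 := nc _ _ _ _ ewv edc.
have n1 : f v != f c by rewrite (inj_eq fi).
have n2 : f v != f d by rewrite (inj_eq fi).
have n3 : f w != f c by rewrite (inj_eq fi).
have n4 : f w != f d by rewrite (inj_eq fi).
rewrite /betw; lia.
Qed.

Lemma walk_same e f c d (g : nat -> T) m : injective f -> symmetric e -> NC e f -> e c d ->
  (forall s, s < m -> e (g s) (g s.+1)) ->
  (forall s, s <= m -> (g s != c) && (g s != d)) ->
  betw f c d (g m) = betw f c d (g 0).
Proof.
move=> fi sy nc ecd; elim: m => // m IH ge gn.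
have /andP[a1 a2] := gn m (leqnSn m). have /andP[b1 b2] := gn m.+1 (leqnn _).
have <- : betw f c d (g m) = betw f c d (g 0) by apply: IH => s hs; [apply: ge | apply: gn]; lia.
symmetry; apply: (edge_same fi sy nc ecd) => //; apply: ge; lia.
Qed.

Lemma four f p q u y : injective f -> p != q -> p != u -> p != y -> q != u -> q != y -> u != y ->
  betw f p q u != betw f p q y \/ betw f p u q != betw f p u y \/ betw f u q p != betw f u q y.
Proof.
move=> fi h1 h2 h3 h4 h5 h6.
rewrite -(inj_eq fi) in h1. rewrite -(inj_eq fi) in h2. rewrite -(inj_eq fi) in h3.
rewrite -(inj_eq fi) in h4. rewrite -(inj_eq fi) in h5. rewrite -(inj_eq fi) in h6.
rewrite /betw; lia.
Qed.

Definition ordm (N : nat) (hN : 0 < N) (x : nat) : 'I_N := Ordinal (ltn_pmod x hN).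

Lemma cyc_same e f N (hN : 0 < N) (emb : 'I_N -> T) c d x0 L :
  injective f -> symmetric e -> NC e f -> e c d ->
  (forall i j : 'I_N, nat_of_ord j = (nat_of_ord i).+1 %% N -> e (emb i) (emb j)) ->
  (forall s, s <= L -> (emb (ordm hN (x0+s)) != c) && (emb (ordm hN (x0 + s)) != d)) ->
  forall m, m <= L -> betw f c d (emb (ordm hN (x0+m))) = betw f c d (emb (ordm hN x0)).
Proof.
move=> fi sy nc ecd he av m hm.
have := @walk_same e f c d (fun s => emb (ordm hN (x0 + s))) m fi sy nc ecd.
rewrite addn0; apply.
  move=> s _; apply: he => /=.
  by rewrite addnS -[in RHS]addn1 modnDml addn1.
by move=> s hs; apply: av; lia.
Qed.

End Gen.

Lemma mod_small2 N x : x < 2 * N -> x %% N = if x < N then x else x - N.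
Proof.
case: ifP => h hx; first by rewrite modn_small.
have e : x = (x - N) + N by lia.
by rewrite {1}e modnDr modn_small //; lia.
Qed.

Lemma represent N x0 a : x0 <= N -> a < N -> exists m, m < N /\ ((x0 + m = a) \/ (x0 + m = a + N)).
Proof.
move=> h1 h2; case: (leqP x0 a) => h.
  exists (a - x0); split; [lia | left; lia].
exists (a + N - x0); split; [lia | right; lia].
Qed.

Lemma ar_pj (i j : nat) : j != i -> (2 * j != 2 * i) && (2 * j != (2 * i).+1).
Proof. move=> h; lia. Qed.
Lemma ar_av2 k i s : i < k -> s <= 2 * k - 2 -> ((2 * i).+1 + s) %% (2 * k) != 2 * i.
Proof. move=> h1 h2; rewrite mod_small2; first (case: ifP; lia). lia. Qed.
Lemma ar_av3 k i s : i < k -> s <= 2 * k - 2 -> ((2 * i).+2 + s) %% (2 * k) != (2 * i).+1.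
Proof. move=> h1 h2; rewrite mod_small2; first (case: ifP; lia). lia. Qed.
Lemma ar_cov2 k i a : i < k -> a < 2 * k -> a != 2 * i ->
  exists m, m <= 2 * k - 2 /\ ((2 * i).+1 + m = a \/ (2 * i).+1 + m = a + 2 * k).
Proof.
move=> h1 h2 h3; have [|m [hm1 hm2]] := @represent (2 * k) (2 * i).+1 a _ h2; first lia.
exists m; split; lia.
Qed.
Lemma ar_cov3 k i a : i < k -> a < 2 * k -> a != (2 * i).+1 ->
  exists m, m <= 2 * k - 2 /\ ((2 * i).+2 + m = a \/ (2 * i).+2 + m = a + 2 * k).
Proof.
move=> h1 h2 h3; have [|m [hm1 hm2]] := @represent (2 * k) (2 * i).+2 a _ h2; first lia.
exists m; split; lia.
Qed.
Lemma ar_av4 k i s : 1 < k -> i < k -> s <= 2 * k - 3 ->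
  (((2 * i).+2 + s) %% (2 * k) != 2 * i) && (((2 * i).+2 + s) %% (2 * k) != (2 * i).+1).
Proof. move=> h0 h1 h2; rewrite mod_small2; first (case: ifP; lia). lia. Qed.
Lemma ar_cov4 k i a : i < k -> a < 2 * k -> a != 2 * i -> a != (2 * i).+1 ->
  exists m, m <= 2 * k - 3 /\ ((2 * i).+2 + m = a \/ (2 * i).+2 + m = a + 2 * k).
Proof.
move=> h1 h2 h3 h4; have [|m [hm1 hm2]] := @represent (2 * k) (2 * i).+2 a _ h2; first lia.
exists m; split; lia.
Qed.
Lemma ar_nx_pv k a : 1 < k -> a < 2 * k -> a.+1 %% (2 * k) != (a + 2 * k - 1) %% (2 * k).
Proof. move=> h1 h2; rewrite !mod_small2; try lia; case: ifP; case: ifP; lia. Qed.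
Lemma ar_nx_a k a : 1 < k -> a < 2 * k -> a.+1 %% (2 * k) != a.
Proof. move=> h1 h2; rewrite !mod_small2; try lia; case: ifP; lia. Qed.
Lemma ar_pv k a : 0 < k -> a < 2 * k -> a = ((a + 2 * k - 1) %% (2 * k)).+1 %% (2 * k).
Proof.
move=> h1 h2; rewrite -[in RHS]addn1 modnDml.
have -> : a + 2 * k - 1 + 1 = a + 2 * k by lia.
by rewrite modnDr modn_small.
Qed.
Lemma ar_half k a : a < 2 * k -> a %/ 2 < k.
Proof. move=> h; lia. Qed.
Lemma ar_half2 a : (a == 2 * (a %/ 2)) || (a == (2 * (a %/ 2)).+1).
Proof. lia. Qed.
Lemma ar_half_eq a j : (a %/ 2 == j) = (a == 2 * j) || (a == (2 * j).+1).
Proof. lia. Qed.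

Lemma bigmin_le_seq (I : eqType) (s : seq I) (P : pred I) (F : I -> nat) x0 i :
  i \in s -> P i -> \big[minn/x0]_(j <- s | P j) F j <= F i.
Proof.
elim: s => // a s IH; rewrite inE big_cons => /orP [/eqP <- | h] hP.
  by rewrite hP; exact: geq_minl.
case: (P a); last exact: IH.
exact: leq_trans (geq_minr _ _) (IH h hP).
Qed.

Section Main.
Variables (k : nat) (hk : 2 <= k) (H : rel 'I_(2*k)).
Hypothesis HM : maximal_outerplanar H.
Hypothesis hcyc : forall i j : 'I_(2 * k), nat_of_ord j = (nat_of_ord i).+1 %% (2 * k) -> H i j.
Local Notation T := ('I_(2*k) + 'I_k)%type.
Local Notation G := (GH H).

Lemma hN : 0 < 2 * k. Proof. lia. Qed.
Lemma pa_lt (i : 'I_k) : 2 * i < 2 * k. Proof. have := ltn_ord i; lia. Qed.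
Lemma qa_lt (i : 'I_k) : (2 * i).+1 < 2 * k. Proof. have := ltn_ord i; lia. Qed.
Definition pa i := Ordinal (pa_lt i).
Definition qa i := Ordinal (qa_lt i).

Lemma Hsym : symmetric H. Proof. by case: HM => [[]]. Qed.
Lemma Hirr : irreflexive H. Proof. by case: HM => [[]]. Qed.
Lemma Gsym : symmetric G.
Proof. by case=> [a|i] [b|j] //=; rewrite Hsym. Qed.
Lemma Girr : irreflexive G.
Proof. by case=> [a|i] //=; rewrite Hirr. Qed.
Lemma Hpq i : H (pa i) (qa i).
Proof. apply: hcyc => /=; rewrite modn_small //; exact: qa_lt. Qed.
Lemma Gup i : G (inr i) (inl (pa i)). Proof. by rewrite /= eqxx. Qed.
Lemma Guq i : G (inr i) (inl (qa i)). Proof. by rewrite /= eqxx orbT. Qed.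

Lemma ord_neq n (a b : 'I_n) : a != b -> nat_of_ord a != nat_of_ord b.
Proof. by move=> h; apply: contraNneq h => e; rewrite (val_inj e). Qed.
Lemma inl_neq (a b : 'I_(2*k)) : nat_of_ord a != nat_of_ord b -> inl a != inl b :> T.
Proof. by move=> h; apply: contraNneq h => -[->]. Qed.
Lemma inl_neq' (a b : 'I_(2*k)) : inl a != inl b :> T -> nat_of_ord a != nat_of_ord b.
Proof. by move=> h; apply: contraNneq h => e; rewrite (val_inj e). Qed.

Lemma reach (e : rel T) f c d x0 L :
  injective f -> symmetric e -> NC e f -> e c d -> (forall a b, G a b -> e a b) ->
  (forall s, s <= L -> (inl (ordm hN (x0+s)) != c :> T) && (inl (ordm hN (x0+s)) != d)) ->
  (forall a : 'I_(2*k), inl a != c :> T -> inl a != d ->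
     exists m, m <= L /\ (x0 + m = a \/ x0 + m = a + 2*k)) ->
  (forall j : 'I_k, inr j != c :> T -> inr j != d -> (inl (pa j) != c :> T) && (inl (pa j) != d)) ->
  forall v, v != c -> v != d -> betw f c d v = betw f c d (inl (ordm hN x0)).
Proof.
move=> fi sy nc ecd sub av cov pj.
have hinl : forall a : 'I_(2*k), inl a != c :> T -> inl a != d ->
    betw f c d (inl a) = betw f c d (inl (ordm hN x0)).
  move=> a h1 h2; have [m [hm ha]] := cov a h1 h2.
  have -> : a = ordm hN (x0 + m).
    apply: val_inj => /=; case: ha => ->; first by rewrite modn_small.
    by rewrite modnDr modn_small.
  apply: (@cyc_same _ e f _ hN inl c d x0 L) => //.
  by move=> i j hij; apply: sub => /=; apply: hcyc.
case=> [a|j] h1 h2; first exact: hinl.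
have /andP[g1 g2] := pj j h1 h2.
rewrite (@edge_same _ e f c d (inr j) (inl (pa j))) //; first exact: hinl.
apply: sub; by rewrite /= eqxx.
Qed.

Lemma max_u (i : 'I_k) (y : T) : y != inr i -> ~~ G (inr i) y -> ~ outerplanar (add_edge G (inr i) y).
Proof.
move=> yu nG [f [fi nc]].
set e := add_edge G (inr i) y.
have sub : forall a b, G a b -> e a b by move=> a b h; rewrite /e /add_edge h.
have sy : symmetric e.
  move=> a b; rewrite /e /add_edge Gsym; congr (_ || _); rewrite orbC; congr (_ || _); rewrite andbC //.
have nc' : NC e f := nc.
have epq : e (inl (pa i)) (inl (qa i)) by apply: sub; exact: Hpq.
have eup : e (inr i) (inl (pa i)) by apply: sub; exact: Gup.
have euq : e (inr i) (inl (qa i)) by apply: sub; exact: Guq.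
have euy : e (inr i) y by rewrite /e /add_edge !eqxx orbT.
have yp : y != inl (pa i) by apply: contraNneq nG => ->; exact: Gup.
have yq : y != inl (qa i) by apply: contraNneq nG => ->; exact: Guq.
have pq : inl (pa i) != inl (qa i) :> T by apply: inl_neq => /=; lia.
have hi := ltn_ord i.
have up : inr i != inl (pa i) :> T by [].
have uq : inr i != inl (qa i) :> T by [].
have py : inl (pa i) != y by rewrite eq_sym.
have qy : inl (qa i) != y by rewrite eq_sym.
have uy : inr i != y by rewrite eq_sym.
have pjw : forall w, (w = inl (pa i) \/ w = inl (qa i)) -> forall j : 'I_k, inr j != inr i :> T ->
     (inl (pa j) != w :> T) && (inl (pa j) != inr i :> T).
  move=> w hw j h.
  have hj : nat_of_ord j != nat_of_ord i by apply: contraNneq h => e'; rewrite (val_inj e').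
  have /andP[a1 a2] := ar_pj hj.
  by case: hw => ->; rewrite andbT; apply: inl_neq.
have pj1 : forall w, (w = inl (pa i) \/ w = inl (qa i)) -> forall j : 'I_k, inr j != w :> T -> inr j != inr i :> T ->
     (inl (pa j) != w :> T) && (inl (pa j) != inr i :> T).
  by move=> w hw j _ h; apply: pjw.
have pj2 : forall w, (w = inl (pa i) \/ w = inl (qa i)) -> forall j : 'I_k, inr j != inr i :> T -> inr j != w :> T ->
     (inl (pa j) != inr i :> T) && (inl (pa j) != w :> T).
  by move=> w hw j h _; rewrite andbC; apply: pjw.
have := four fi pq (isT : inl (pa i) != inr i :> T) py (isT : inl (qa i) != inr i :> T) qy uy.
case=> [h|[h|h]].
- move/negP: h; apply; apply/eqP; apply: (edge_same fi sy nc' epq euy) => //; by rewrite eq_sym.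
- have epu : e (inl (pa i)) (inr i) by rewrite sy.
  have R := @reach e f (inl (pa i)) (inr i) (2 * i).+1 (2 * k - 2) fi sy nc' epu sub.
  have qp : inl (qa i) != inl (pa i) :> T by rewrite eq_sym.
  move/negP: h; apply; rewrite (R _ _ _ (inl (qa i))) // ?(R _ _ _ y) //.
  + move=> s hs; apply/andP; split => //; apply: inl_neq => /=.
    exact: ar_av2.
  + move=> a h1 _; have /= ha := inl_neq' h1.
    exact: ar_cov2.
  + apply: pj1; tauto.
  + move=> s hs; apply/andP; split => //; apply: inl_neq => /=.
    exact: ar_av2.
  + move=> a h1 _; have /= ha := inl_neq' h1.
    exact: ar_cov2.
  + apply: pj1; tauto.
- have R := @reach e f (inr i) (inl (qa i)) (2 * i).+2 (2 * k - 2) fi sy nc' euq sub.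
  have pq' : inl (pa i) != inl (qa i) :> T by [].
  move/negP: h; apply; rewrite (R _ _ _ (inl (pa i))) // ?(R _ _ _ y) //.
  + move=> s hs; apply/andP; split => //; apply: inl_neq => /=.
    exact: ar_av3.
  + move=> a _ h1; have /= ha := inl_neq' h1.
    exact: ar_cov3.
  + apply: pj2; tauto.
  + move=> s hs; apply/andP; split => //; apply: inl_neq => /=.
    exact: ar_av3.
  + move=> a _ h1; have /= ha := inl_neq' h1.
    exact: ar_cov3.
  + apply: pj2; tauto.
Qed.

Lemma op_ext (e1 e2 : rel T) : (forall a b, e1 a b = e2 a b) -> outerplanar e1 -> outerplanar e2.
Proof. move=> h [f [fi nc]]; exists f; split => // a b c d h1 h2; apply: nc; by rewrite h. Qed.

Lemma maxG (x y : T) : x != y -> ~~ G x y -> ~ outerplanar (add_edge G x y).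
Proof.
case: x => [a|i]; case: y => [b|j] hxy hG.
- case=> f [fi nc]; case: HM => _ [_ hmax]; apply: (hmax a b) => //.
  exists (fun v => f (inl v)); split; first by move=> u v /fi [].
  move=> a' b' c' d' h1 h2; apply: nc; [exact: h1 | exact: h2].
- move=> hop; apply: (@max_u j (inl a)) => //.
  apply: op_ext hop => u v; rewrite /add_edge; congr (_ || _); exact: orbC.
- by apply: max_u => //; rewrite eq_sym.
- by apply: max_u => //; rewrite eq_sym.
Qed.

Section Outer.
Variable fH : 'I_(2*k) -> nat.
Hypothesis fHi : injective fH.
Hypothesis ncH : NC H fH.

Definition P (i : 'I_k) := betw fH (pa i) (qa i) (ordm hN (2 * i).+2).

Lemma side i a : a != pa i -> a != qa i -> betw fH (pa i) (qa i) a = P i.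
Proof.
move=> h1 h2.
have hi := ltn_ord i.
have [m [hm ha]] := @ar_cov4 k i a hi (ltn_ord a) (ord_neq h1) (ord_neq h2).
have -> : a = ordm hN ((2 * i).+2 + m).
  apply: val_inj => /=; case: ha => ->; first by rewrite modn_small.
  by rewrite modnDr modn_small.
rewrite /P; apply: (@cyc_same _ H fH _ hN id (pa i) (qa i) (2 * i).+2 (2 * k - 3)) => //.
- exact: Hsym.
- exact: Hpq.
- move=> s hs; have /andP[b1 b2] := ar_av4 hk hi hs.
  by apply/andP; split; [apply: contra_neq b1 | apply: contra_neq b2] => /(congr1 val) e; exact: e.
Qed.

Definition W i := if P i == (fH (pa i) < fH (qa i)) then qa i else pa i.
Definition O i := if P i == (fH (pa i) < fH (qa i)) then pa i else qa i.

Lemma WO_val i : (W i = pa i /\ O i = qa i) \/ (W i = qa i /\ O i = pa i).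
Proof. rewrite /W /O; case: ifP => _; tauto. Qed.

Lemma pq_neq i : pa i != qa i.
Proof. by apply/negP => /eqP /(congr1 val) /= e; move: e; lia. Qed.

Lemma W_ord i : if P i then fH (O i) < fH (W i) else fH (W i) < fH (O i).
Proof.
have : fH (pa i) != fH (qa i) by rewrite (inj_eq fHi) pq_neq.
move=> ne; rewrite /W /O; case: (P i); case: (ltngtP (fH (pa i)) (fH (qa i))) => h /=; rewrite ?h /=. all: try lia.
Qed.

Lemma betw_sym (T' : finType) (f : T' -> nat) x y v : betw f x y v = betw f y x v.
Proof. by rewrite /betw orbC. Qed.

Lemma side' i a : a != W i -> a != O i -> betw fH (W i) (O i) a = P i.
Proof.
case: (WO_val i) => [[-> ->]|[-> ->]] h1 h2; first exact: side.
by rewrite betw_sym; apply: side.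
Qed.

Lemma W_neq i j : j != i -> W j != W i /\ W j != O i.
Proof.
move=> h; have hj := ord_neq h.
have e1 : 2 * j != 2 * i by move: hj; lia.
have e2 : 2 * j != (2 * i).+1 by move: hj; lia.
have e3 : (2 * j).+1 != 2 * i by move: hj; lia.
have e4 : (2 * j).+1 != (2 * i).+1 by move: hj; lia.
by case: (WO_val i) => [[-> ->]|[-> ->]]; case: (WO_val j) => [[-> _]|[-> _]]; split;
  apply/negP => /eqP /(congr1 val) /= /eqP; apply/negP.
Qed.

Definition fG (v : T) := match v with inl a => 3 * fH a + 1 | inr i => 3 * fH (W i) + 2 end.

Lemma fG_inj : injective fG.
Proof.
case=> [a|i] [b|j] /= h.
- by congr inl; apply: fHi; lia.
- lia.
- lia.
- have e : W i = W j by apply: fHi; lia.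
  have [[e1 _]|[e1 _]] := WO_val i; have [[e2 _]|[e2 _]] := WO_val j;
  rewrite e1 e2 in e; move: e => /(congr1 val) /= e; congr inr; apply: ord_inj; move: e; lia.
Qed.

Definition good x y := (forall v, ~~ betw fG x y v) \/ (forall v, v != x -> v != y -> betw fG x y v).

Lemma ugood i : good (inr i) (inl (W i)) /\ good (inr i) (inl (O i)).
Proof.
split.
- by left => v; rewrite /betw /=; case: v => [a|j] /=; lia.
- have hord := W_ord i. have sd := @side' i.
  case hP : (P i) in hord sd *.
  + right => v h1 h2. case: v h1 h2 => [a|j] h1 h2.
    * case: (eqVneq a (W i)) => [->|haW]; first by rewrite /betw /=; lia.
      have hO : a != O i by apply: contraNneq h2 => ->.
      have := sd a haW hO; rewrite /betw /=; lia.
    * have hji : j != i by apply: contraNneq h1 => ->.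
      have [n1 n2] := W_neq hji.
      have := sd _ n1 n2; rewrite /betw /=; lia.
  + left => v; case: v => [a|j].
    * case: (eqVneq a (W i)) => [->|haW]; first by rewrite /betw /=; lia.
      case: (eqVneq a (O i)) => [->|haO]; first by rewrite /betw /=; lia.
      have := sd a haW haO; rewrite /betw /=; lia.
    * case: (eqVneq j i) => [->|hji]; first by rewrite /betw /=; lia.
      have [n1 n2] := W_neq hji. have := sd _ n1 n2; rewrite /betw /=; lia.
Qed.

Lemma Gu_w i w : G (inr i) (inl w) -> w = W i \/ w = O i.
Proof.
move=> /= /orP [] /eqP e.
- have -> : w = pa i by apply: ord_inj.
  by case: (WO_val i) => [[-> _]|[_ ->]]; tauto.
- have -> : w = qa i by apply: ord_inj.
  by case: (WO_val i) => [[_ ->]|[-> _]]; tauto.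
Qed.

Lemma good_u i w : G (inr i) (inl w) -> good (inr i) (inl w).
Proof. by case/Gu_w => ->; case: (ugood i). Qed.

Lemma good_sym x y : good x y -> good y x.
Proof.
case=> h; [left => v | right => v h1 h2]; rewrite betw_sym; [exact: h | exact: h].
Qed.

Lemma nocross_l a b c d : good a b -> fG a < fG c -> fG c < fG b -> fG b < fG d -> False.
Proof.
move=> [] h h1 h2 h3.
- by move: (h c); rewrite /betw h1 h2.
- have da : d != a by apply/eqP => e; move: h1 h2 h3; rewrite e; lia.
  have db : d != b by apply/eqP => e; move: h3; rewrite e; lia.
  move: (h d da db); rewrite /betw; lia.
Qed.

Lemma nocross_r a b c d : good c d -> fG a < fG c -> fG c < fG b -> fG b < fG d -> False.
Proof.
move=> [] h h1 h2 h3.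
- by move: (h b); rewrite /betw h2 h3.
- have ac : a != c by apply/eqP => e; move: h1; rewrite e; lia.
  have ad : a != d by apply/eqP => e; move: h1 h2 h3; rewrite e; lia.
  move: (h a ac ad); rewrite /betw; lia.
Qed.

Lemma ncG : NC G fG.
Proof.
move=> a b c d hab hcd [h1 [h2 h3]].
case: a hab h1 h2 h3 => [a|i]; case: b => [b|j] hab h1 h2 h3.
- case: c hcd h1 h2 => [c|i]; case: d h3 => [d|j] h3 hcd h1 h2.
  + apply: (ncH hab hcd); move: h1 h2 h3 => /=; lia.
  + have g : good (inl c) (inr j) by apply: good_sym; apply: good_u; rewrite Gsym.
    exact: (nocross_r g h1 h2 h3).
  + exact: (nocross_r (good_u hcd) h1 h2 h3).
  + by [].
- have g : good (inl a) (inr j) by apply: good_sym; apply: good_u; rewrite Gsym.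
  exact: (nocross_l g h1 h2 h3).
- exact: (nocross_l (good_u hab) h1 h2 h3).
- by [].
Qed.

End Outer.

Lemma G_outer : outerplanar G.
Proof.
case: HM => _ [[fH [fHi ncH]] _].
exists (fG fH); split; [exact: fG_inj | exact: ncG].
Qed.

Lemma G_max : maximal_outerplanar G.
Proof.
split; first by split; [exact: Girr | exact: Gsym].
split; first exact: G_outer.
exact: maxG.
Qed.

Definition nx (a : 'I_(2*k)) := ordm hN a.+1.
Definition pv (a : 'I_(2*k)) := ordm hN (a + 2 * k - 1).
Definition hf (a : 'I_(2*k)) : 'I_k := Ordinal (ar_half (ltn_ord a)).

Lemma G_nx a : G (inl a) (inl (nx a)). Proof. by apply: hcyc. Qed.
Lemma G_pv a : G (inl a) (inl (pv a)).
Proof. rewrite /= Hsym; apply: hcyc => /=; apply: ar_pv => //; lia. Qed.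
Lemma G_hf a : G (inl a) (inr (hf a)). Proof. exact: ar_half2. Qed.

Lemma deg_inl a : 2 < degree G (inl a).
Proof.
apply/card_gt2P; exists (inl (nx a)), (inl (pv a)), (inr (hf a)); split.
  by split; rewrite inE; [exact: G_nx | exact: G_pv | exact: G_hf].
split => //; apply: inl_neq => /=; apply: ar_nx_pv => //.
Qed.

Lemma deg_inr i : degree G (inr i) = 2.
Proof.
rewrite /degree (_ : [set y | G (inr i) y] = [set inl (pa i); inl (qa i)]).
  by rewrite cards2 (inl_neq (ord_neq (pq_neq i))).
apply/setP => y; rewrite !inE; case: y => [b|j] //=.
Qed.

Lemma t_val : #|[set v | degree G v == 2]| = k.
Proof.
have -> : [set v | degree G v == 2] = [set inr x | x in [set: 'I_k]] :> {set T}.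
  apply/setP => v; rewrite inE; case: v => [a|i].
  - have h := deg_inl a.
    have -> : (degree G (inl a) == 2) = false by apply/eqP => e; rewrite e in h.
    by apply/esym/negP => /imsetP [x _ e].
  - by rewrite deg_inr eqxx; apply/esym/imsetP; exists i; rewrite ?inE.
rewrite card_imset; first by rewrite cardsT card_ord.
by move=> x y [].
Qed.

Definition phi (v : T) : 'I_k := match v with inl a => hf a | inr i => i end.

Lemma dd_lower D : double_dominating G D -> 2 * k <= #|D|.
Proof.
move=> /forallP hD.
rewrite -sum1_card (partition_big phi predT) //=.
apply: (@leq_trans (\sum_(j : 'I_k) 2)); first by rewrite sum_nat_const card_ord mulnC.
apply: leq_sum => j _.
rewrite sum1dep_card.
have := hD (inr j).
have -> : [set y in D | (y == inr j) || G (inr j) y] = [set x | (x \in D) && (phi x == j)].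
  apply/setP => y; rewrite !inE; case: y => [b|i] /=; congr (_ && _).
    by rewrite -val_eqE /= ar_half_eq.
  by rewrite orbF.
by [].
Qed.

Definition D0 : {set T} := [set inl x | x in [set: 'I_(2*k)]].

Lemma D0_card : #|D0| = 2 * k.
Proof. rewrite card_imset; first by rewrite cardsT card_ord. by move=> x y []. Qed.

Lemma inD0 a : inl a \in D0.
Proof. by apply/imsetP; exists a; rewrite ?inE. Qed.

Lemma D0_dd : double_dominating G D0.
Proof.
apply/forallP => v; apply/card_gt1P; case: v => [a|i].
- exists (inl a), (inl (nx a)); split; rewrite ?inE ?inD0 ?eqxx ?G_nx ?orbT //.
  rewrite eq_sym; apply: inl_neq => /=; exact: ar_nx_a.
- exists (inl (pa i)), (inl (qa i)); split; rewrite ?inE ?inD0 ?Gup ?Guq ?orbT //.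
  exact: (inl_neq (ord_neq (pq_neq i))).
Qed.

Lemma ddn : double_dom_number G = 2 * k.
Proof.
rewrite /double_dom_number; apply/eqP; rewrite eqn_leq; apply/andP; split.
  apply: (@leq_trans #|D0|); last by rewrite D0_card.
  apply: bigmin_le_seq; [exact: mem_index_enum | exact: D0_dd].
apply: (big_ind (fun x => 2 * k <= x)).
- by rewrite card_sum !card_ord; lia.
- by move=> x y hx hy; rewrite leq_min hx hy.
- exact: dd_lower.
Qed.

Lemma main_sec :
  let G := GH H in
  let n := #|{: 'I_(2 * k) + 'I_k}| in
  let t := #|[set v | degree G v == 2]| in
  maximal_outerplanar G /\ n = 3 * k /\ t = k /\
  3 * double_dom_number G = 2 * n /\
  2 * double_dom_number G = n + t /\
  double_dom_number G = n - t.
Proof.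
move=> G' n t.
have hn : n = 3 * k by rewrite /n card_sum !card_ord; lia.
have ht : t = k by exact: t_val.
rewrite /G' ddn hn ht; split; first exact: G_max.
by do 4 (split; first lia); lia.
Qed.
End Main.

Theorem mainTheorem3 (k : nat) (hk : 2 <= k) (H : rel 'I_(2 * k)) :
  maximal_outerplanar H ->
  (* a_1 a_2 ... a_{2k} a_1 is the (outer) Hamiltonian cycle of H;
     a_{j+1} is the ordinal j *)
  (forall i j : 'I_(2 * k), nat_of_ord j = (nat_of_ord i).+1 %% (2 * k) -> H i j) ->
  let G := GH H in
  let n := #|{: 'I_(2 * k) + 'I_k}| in
  let t := #|[set v | degree G v == 2]| in
  maximal_outerplanar G /\ n = 3 * k /\ t = k /\
  3 * double_dom_number G = 2 * n /\
  2 * double_dom_number G = n + t /\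
  double_dom_number G = n - t.
Proof.
move=> hM hc; exact: (main_sec hk hM hc).
Qed.
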